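(* Let $(X,T)$ be a minimal topological dynamical system with $X$ compact metrisable and $T$ abelian, with maximal equicontinuous factor map $\pi:X\to X_{max}$, and let $e$ be a minimal idempotent of its Ellis semigroup $E$. Let $s:X_{max}\to{\mathcal H}_e$ be a map with $ev_0\circ\pi_*\circ s={\mathrm{id}}$ and $s\circ\delta^t=\alpha^t\circ s$ for all $t\in T$. Let $f\in K_e$ with $f\neq e$ and let $a\in X_{max}$. Then $\mathrm{supp}(s(a)fs(a)^{-1})=\mathrm{supp}(f)+a$, where $s(a)^{-1}$ is the inverse in ${\mathcal H}_e$.
   Context: $T$ acts on $X$ by homeomorphisms $\alpha^t$. $E$ is the closure of $\{\alpha^t\}$ in $X^X$ (pointwise convergence, composition as product); minimal idempotents are idempotents of its smallest two-sided ideal. ${\mathcal H}_e=eEe$ is the structure group, a group with identity $e$. Since $(X,T)$ is minimal and $T$ abelian, $X_{max}$ is a compact abelian group (written additively, neutral element $0$) on which $T$ acts by translations $\delta^t$; its Ellis semigroup $E(X_{max})$ is a group and evaluation at $0$, $ev_0:E(X_{max})\to X_{max}$, is an isomorphism. $\pi_*:E(X)\to E(X_{max})$ is the induced epimorphism $\pi_*(g)(\pi(x))=\pi(g(x))$. $K_e$ is the subgroup of ${\mathcal H}_e$ of elements $g$ preserving the fibres of $\pi$ (i.e. $\pi(g(x))=\pi(x)$ for all $x$). For $g\in{\mathcal H}_e$, $g$ acts trivially at $\xi\in X_{max}$ if all points of $e(\pi^{-1}(\xi))$ are fixed by $g$, and $\mathrm{supp}(g)$ is the set of points at which $g$ does not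 act trivially. *)

(* Defs.v *)
From HB Require Import structures.
From Stdlib Require Import ClassicalEpsilon.
From mathcomp Require Import all_boot all_order all_algebra.
From mathcomp Require Import all_classical all_reals all_analysis.
Set Implicit Arguments. Unset Strict Implicit. Unset Printing Implicit Defensive.
Import Order.TTheory GRing.Theory Num.Theory.
Local Open Scope classical_set_scope.
Local Open Scope ring_scope.

Definition is_action (T : zmodType) (X : topologicalType) (a : T -> X -> X) :=
  [/\ a 0 = id, (forall s t, a (s + t) = a s \o a t) & (forall t, continuous (a t))].

Definition minimal_system (T : zmodType) (X : topologicalType) (a : T -> X -> X) :=
  forall x : X, closure (range (fun t => a t x)) = [set: X].

Definition factor_map (T : zmodType) (X Y : topologicalType)
  (a : T -> X -> X) (b : T -> Y -> Y) (p : X -> Y) :=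
  [/\ continuous p, (forall y, exists x, p x = y) & (forall t x, p (a t x) = b t (p x))].

(** The maximal equicontinuous factor, with X_max a compact (Hausdorff) abelian
    topological group on which T acts by the translations d t xi = xi + c t. *)
Definition is_max_equicontinuous_factor (T : zmodType) (X : topologicalType)
  (a : T -> X -> X) (Xm : topologicalZmodType) (c : T -> Xm) (pi : X -> Xm) :=
  [/\ hausdorff_space Xm, compact [set: Xm],
      (forall s t, c (s + t) = c s + c t),
      factor_map a (fun t xi => xi + c t) pi &
      (forall (Y : puniformType) (b : T -> Y -> Y) (p : X -> Y),
          hausdorff_space Y -> compact [set: Y] -> is_action b ->
          equicontinuous [set: T] b -> factor_map a b p ->
          exists q : Xm -> Y, continuous q /\ (forall x, q (pi x) = p x))].

Definition ellis (T : Type) (X : topologicalType) (a : T -> X -> X) : set (X -> X) :=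
  @closure {ptws X -> X} (range a).

Definition two_sided_ideal (X : Type) (E I : set (X -> X)) :=
  [/\ I !=set0, I `<=` E &
      forall g h, E g -> I h -> I (g \o h) /\ I (h \o g)].

Definition smallest_ideal (X : Type) (E I : set (X -> X)) :=
  two_sided_ideal E I /\ forall J, two_sided_ideal E J -> I `<=` J.

Definition minimal_idempotent (X : Type) (E : set (X -> X)) (e : X -> X) :=
  (exists I, smallest_ideal E I /\ I e) /\ e \o e = e.

Definition structure_group (X : Type) (E : set (X -> X)) (e : X -> X) : set (X -> X) :=
  [set e \o g \o e | g in E].

Definition Hinv (X : Type) (E : set (X -> X)) (e g : X -> X) : X -> X :=
  epsilon (inhabits id)
    (fun h => structure_group E e h /\ h \o g = e /\ g \o h = e).

Definition pi_star (X Xm : Type) (pi : X -> Xm) (g : X -> X) : Xm -> Xm :=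
  epsilon (inhabits id) (fun h => forall x, h (pi x) = pi (g x)).

Definition ev0 (Xm : zmodType) (h : Xm -> Xm) : Xm := h 0.

Definition K_e (X Xm : Type) (E : set (X -> X)) (e : X -> X) (pi : X -> Xm) :
  set (X -> X) :=
  [set g | structure_group E e g /\ forall x, pi (g x) = pi x].

Definition supp (X Xm : Type) (e : X -> X) (pi : X -> Xm) (g : X -> X) : set Xm :=
  [set xi | exists x, pi x = xi /\ g (e x) <> e x].

(* Main.v *)
Require Import Defs.
From HB Require Import structures.
From Stdlib Require Import ClassicalEpsilon.
From mathcomp Require Import all_boot all_order all_algebra.
From mathcomp Require Import all_classical all_reals all_analysis.
Import Order.TTheory GRing.Theory Num.Theory.
Local Open Scope classical_set_scope.
Local Open Scope ring_scope.

Set Implicit Arguments. Unset Strict Implicit. Unset Printing Implicit Defensive.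

Lemma cT (R : realType) (X : pseudoMetricType R) :
  compact [set: X] -> compact [set: {ptws X -> X}].
Proof. move=> cX.
have := @tychonoff _ (fun _ : X => X) (fun _ => setT) (fun=> cX).
by congr compact; rewrite predeqE.
Qed.

Lemma ctsP (R : realType) (X : pseudoMetricType R) (Y : topologicalType) (F : Y -> {ptws X -> X}) :
  (forall x, continuous (fun y => F y x)) -> continuous F.
Proof. move=> H y. apply/pointwise_cvgP => t. exact: H. Qed.

Lemma projC (R : realType) (X : pseudoMetricType R) (x : X) :
  continuous (fun f : {ptws X -> X} => f x).
Proof. exact: proj_continuous. Qed.

Lemma closed_pre (Y Z : topologicalType) (f : Y -> Z) (B : set Z) :
  continuous f -> closed B -> closed (f @^-1` B).
Proof.
move=> cf cB p clp; apply: cB => V nV.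
have [y [By Vy]] := clp _ (cf p V nV).
by exists (f y).
Qed.

Lemma closed_eqz (Y Z : topologicalType) (f g : Y -> Z) :
  hausdorff_space Z -> continuous f -> continuous g -> closed [set y | f y = g y].
Proof.
move=> hZ cf cg p clp; apply: hZ => A B nA nB.
have N : nbhs p (f @^-1` A `&` g @^-1` B) by apply: filterI; [exact: cf|exact: cg].
have [y [fg [Ay By]]] := clp _ N.
by exists (f y); split => //; rewrite fg.
Qed.

Lemma E_sub (R : realType) (X : pseudoMetricType R) (T : Type) (alpha : T -> X -> X)
  (C : set (X -> X)) : closed (C : set {ptws X -> X}) -> (forall t, C (alpha t)) ->
  ellis alpha `<=` C.
Proof.
move=> cC H; rewrite /ellis closureE; apply: smallest_sub => //.
by move=> _ [t _ <-].
Qed.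

Lemma E_alpha (R : realType) (X : pseudoMetricType R) (T : Type) (alpha : T -> X -> X) t :
  ellis alpha (alpha t).
Proof. by apply: subset_closure; exists t. Qed.

Lemma E_closed (R : realType) (X : pseudoMetricType R) (T : Type) (alpha : T -> X -> X) :
  closed (ellis alpha : set {ptws X -> X}).
Proof. exact: closed_closure. Qed.

Lemma E_compact (R : realType) (X : pseudoMetricType R) (T : Type) (alpha : T -> X -> X) :
  compact [set: X] -> compact (ellis alpha : set {ptws X -> X}).
Proof. move=> cX; exact: (subclosed_compact (E_closed (alpha:=alpha)) (cT cX)). Qed.

Lemma cont_right (R : realType) (X : pseudoMetricType R) (q : X -> X) :
  continuous (fun u : {ptws X -> X} => (u \o q : {ptws X -> X})).
Proof. by apply: ctsP => x; exact: projC. Qed.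

Lemma cont_left (R : realType) (X : pseudoMetricType R) (a : X -> X) :
  continuous a -> continuous (fun u : {ptws X -> X} => (a \o u : {ptws X -> X})).
Proof.
move=> ca; apply: ctsP => x u.
by apply: (@continuous_comp _ _ _ (fun f : {ptws X -> X} => f x) a); [exact: projC|exact: ca].
Qed.


Lemma E_comp (R : realType) (X : pseudoMetricType R) (T : zmodType) (alpha : T -> X -> X)
  u v : is_action alpha -> ellis alpha u -> ellis alpha v -> ellis alpha (u \o v).
Proof.
move=> [a0 aD ac] Eu Ev.
have step1 : forall t w, ellis alpha w -> ellis alpha (alpha t \o w).
  move=> t w Ew.
  have : ellis alpha `<=` (fun w : {ptws X -> X} => (alpha t \o w : {ptws X -> X})) @^-1` ellis alpha.
    apply: E_sub.
      apply: closed_pre; [exact: cont_left|exact: E_closed].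
    by move=> s; rewrite /preimage /= -aD; exact: E_alpha.
  by apply.
have : ellis alpha `<=` (fun w : {ptws X -> X} => (w \o v : {ptws X -> X})) @^-1` ellis alpha.
  apply: E_sub.
    apply: closed_pre; [exact: cont_right|exact: E_closed].
  by move=> s; exact: step1.
by apply.
Qed.

Lemma E_id (R : realType) (X : pseudoMetricType R) (T : zmodType) (alpha : T -> X -> X) :
  is_action alpha -> ellis alpha id.
Proof. by move=> [a0 _ _]; rewrite -a0; exact: E_alpha. Qed.


Definition lideal (X : Type) (E L : set (X -> X)) :=
  [/\ L !=set0, L `<=` E & forall u l, E u -> L l -> L (u \o l)].
Definition mlideal (X : Type) (E L : set (X -> X)) :=
  lideal E L /\ forall L', lideal E L' -> L' `<=` L -> L `<=` L'.

Lemma exists_mlideal (R : realType) (X : pseudoMetricType R) (T : zmodType)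
  (alpha : T -> X -> X) :
  is_action alpha -> hausdorff_space X -> compact [set: X] ->
  exists L, mlideal (ellis alpha) L.
Proof.
move=> act hX cX.
pose E := ellis alpha.
pose cli (L : set (X -> X)) := lideal E L /\ closed (L : set {ptws X -> X}).
have cliE : cli E.
  split; last exact: E_closed.
  split => //; first by exists id; exact: E_id.
  by move=> u l Eu El; exact: E_comp.
pose Ty := {L : set (X -> X) | cli L}.
pose Rl (A B : Ty) := `[< proj1_sig B `<=` proj1_sig A >].
have [t tmax] : exists t, premaximal Rl t.
  apply: (@ZL_preorder _ (exist _ E cliE)).
  - by move=> A; apply/asboolP.
  - by move=> A B C /asboolP AB /asboolP BC; apply/asboolP; exact: subset_trans BC AB.
  move=> A Atot.
  have [[i0 Ai0]|A0] := pselect (exists i, A i); last first.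
    by exists (exist _ E cliE) => s As; exfalso; apply: A0; exists s.
  pose M := \bigcap_(i in A) proj1_sig i.
  have MsubE : M `<=` E by move=> f Mf; case: (proj2_sig i0) => -[_ + _] _; apply; exact: Mf.
  have cliM : cli M.
    split; last first.
      move=> p clp i Ai; case: (proj2_sig i) => _ ci; apply: ci.
      by apply: (closureS _ clp) => f Mf; exact: Mf.
    split => //; last first.
      by move=> u l Eu Ml i Ai; case: (proj2_sig i) => -[_ _ +] _; apply => //; exact: Ml.
    pose F := filter_from A (@proj1_sig _ _).
    have FF : ProperFilter F.
      apply: filter_from_proper.
        apply: filter_from_filter; first by exists i0.
        move=> i j Ai Aj; have [/asboolP ij|/asboolP ji] := Atot i j Ai Aj.
          by exists j => // f jf; split => //; exact: ij.
        by exists i => // f jf; split => //; exact: ji.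
      by move=> i _; case: (proj2_sig i) => -[]. 
    have FE : F E by exists i0 => //; case: (proj2_sig i0) => -[].
    have [p [Ep clp]] := E_compact (alpha:=alpha) cX FF FE.
    exists p => i Ai; case: (proj2_sig i) => _ ci; apply: ci.
    move=> B nB; exact: (clp (proj1_sig i) B (ex_intro2 _ _ i Ai (@subset_refl _ _)) nB).
  exists (exist _ M cliM) => s As; apply/asboolP => f Mf; exact: Mf.
move: t tmax => [L [[L0 LE Ll] Lc]] tmax.
exists L; split; first by split.
move=> L' [[l L'l] L'E L'l'] L'L.
pose El := [set u \o l | u in E].
have cliEl : cli El.
  split.
    split; first by exists l; exists id => //; exact: E_id.
      by move=> _ [u Eu <-]; apply: E_comp => //; exact: L'E.
    by move=> u _ Eu [v Ev <-]; exists (u \o v) => //; exact: E_comp.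
  apply: compact_closed; first exact: hausdorff_product.
  have := @continuous_compact _ _ (fun u : {ptws X -> X} => (u \o l : {ptws X -> X})) (E : set {ptws X -> X}).
  apply; last exact: E_compact.
  apply: continuous_subspaceT; exact: cont_right.
have ElL' : El `<=` L' by move=> _ [u Eu <-]; exact: L'l'.
have := tmax (exist _ El cliEl).
rewrite /Rl /= => H.
have /asboolP := H (asboolT (subset_trans ElL' L'L)).
by move=> /subset_trans; apply.
Qed.


Lemma mlideal_right (X : Type) (E L : set (X -> X)) p :
  (forall u v, E u -> E v -> E (u \o v)) ->
  mlideal E L -> E p -> mlideal E [set l \o p | l in L].
Proof.
move=> Ec [[[l0 Ll0] LE Ll] Lmin] Ep.
split.
  split; first by exists (l0 \o p); exists l0.
    by move=> _ [l Ll' <-]; apply: Ec => //; exact: LE.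
  by move=> u _ Eu [l Ll' <-]; exists (u \o l) => //; exact: Ll.
move=> L' [[q L'q] L'E L'l] L'Lp.
pose L2 := [set l | L l /\ L' (l \o p)].
have : lideal E L2.
  split.
  - by have [l Ll' lq] := L'Lp _ L'q; exists l; rewrite /L2 /=; split => //; rewrite lq.
  - by move=> l [Ll' _]; exact: LE.
  - move=> u l Eu [Ll' L'lp]; split; first exact: Ll.
    exact: (L'l u _ Eu L'lp).
move=> /Lmin H _ [l Ll' <-].
have HL : L2 `<=` L by move=> f [].
by have [] := H HL l Ll'.
Qed.

Lemma e_in_mlideal (R : realType) (X : pseudoMetricType R) (T : zmodType)
  (alpha : T -> X -> X) e :
  is_action alpha -> hausdorff_space X -> compact [set: X] ->
  minimal_idempotent (ellis alpha) e ->
  exists L, mlideal (ellis alpha) L /\ L e.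
Proof.
move=> act hX cX [[I [[[_ IE _] Imin] Ie]] _].
pose U := [set g | exists L, mlideal (ellis alpha) L /\ L g].
suff : I `<=` U by move=> /(_ e Ie) [L HL]; exists L.
apply: Imin; split.
- have [L mL] := exists_mlideal act hX cX; have [[[l Ll] _ _] _] := mL.
  by exists l; exists L.
- by move=> g [L [[[_ LE _] _] Lg]]; exact: LE.
move=> g h Eg [L [mL Lh]]; split.
  by exists L; split => //; case: mL => -[_ _ +] _; apply.
exists [set l \o g | l in L]; split; last by exists h.
by apply: mlideal_right => // u v; exact: E_comp.
Qed.


Lemma sg_props (X : Type) (E : set (X -> X)) e g :
  (forall x, e (e x) = e x) -> structure_group E e g ->
  (forall x, e (g x) = g x) /\ (forall x, g (e x) = g x).
Proof. by move=> ee [m _ <-]; split => x /=; rewrite ee. Qed.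

Lemma sg_E (R : realType) (X : pseudoMetricType R) (T : zmodType)
  (alpha : T -> X -> X) e g :
  is_action alpha -> ellis alpha e -> structure_group (ellis alpha) e g -> ellis alpha g.
Proof. by move=> act Ee [m Em <-]; do 2!apply: E_comp => //. Qed.

Lemma Hinv_spec (R : realType) (X : pseudoMetricType R) (T : zmodType)
  (alpha : T -> X -> X) e g :
  is_action alpha -> hausdorff_space X -> compact [set: X] ->
  minimal_idempotent (ellis alpha) e -> structure_group (ellis alpha) e g ->
  let h := Hinv (ellis alpha) e g in
  structure_group (ellis alpha) e h /\ h \o g = e /\ g \o h = e.
Proof.
move=> act hX cX mie Hg h.
have [L0 [[[_ L0E L0l] L0min] L0e]] := e_in_mlideal act hX cX mie.
have ee : forall x, e (e x) = e x by move=> x; case: mie => _ /(congr1 (fun f => f x)).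
have eE : ellis alpha e := L0E e L0e.
have linv : forall g, structure_group (ellis alpha) e g ->
    exists2 k, ellis alpha k & k \o g = e.
  move=> g' [m Em <-].
  pose Eg := [set u \o (e \o m \o e) | u in ellis alpha].
  have emE : ellis alpha (e \o m \o e) by do 2!apply: E_comp => //.
  have lEg : lideal (ellis alpha) Eg.
    split.
    - by exists (e \o m \o e); exists id => //; exact: E_id.
    - by move=> _ [u Eu <-]; exact: E_comp.
    - by move=> u _ Eu [v Ev <-]; exists (u \o v) => //; exact: E_comp.
  have EgL0 : Eg `<=` L0.
    move=> _ [u Eu <-]; apply: (L0l) => //.
    by apply: (L0l) => //; exact: E_comp.
  by have [k Ek ke] := L0min Eg lEg EgL0 e L0e; exists k.
have linv2 : forall g, structure_group (ellis alpha) e g ->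
    exists h, structure_group (ellis alpha) e h /\ h \o g = e.
  move=> g' Hg'; have [k Ek kg] := linv g' Hg'.
  have [eg _] := sg_props ee Hg'.
  exists (e \o k \o e); split; first by exists k.
  apply: funext => x /=; rewrite eg.
  by have := congr1 (fun f => f x) kg => /= ->; rewrite ee.
have : exists h, structure_group (ellis alpha) e h /\ h \o g = e /\ g \o h = e.
  have [h0 [Hh0 h0g]] := linv2 g Hg.
  have [h1 [Hh1 h1h0]] := linv2 h0 Hh0.
  have [_ h1e] := sg_props ee Hh1.
  have h1g : h1 = g.
    apply: funext => x; rewrite -h1e.
    have := congr1 (fun f => f x) h0g => /= <-.
    have := congr1 (fun f => f (g x)) h1h0 => /= ->.
    by have [-> _] := sg_props ee Hg.
  by exists h0; split => //; split => //; rewrite -h1g.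
by move=> /(epsilon_spec (inhabits id)).
Qed.

Lemma E_trans (R : realType) (X : pseudoMetricType R) (T : zmodType)
  (alpha : T -> X -> X) (Xm : topologicalZmodType) (c : T -> Xm) (pi : X -> Xm) k :
  hausdorff_space Xm -> continuous pi -> (forall t x, pi (alpha t x) = pi x + c t) ->
  ellis alpha k -> forall x y, pi (k x) - pi (k y) = pi x - pi y.
Proof.
move=> hXm cpi epi Ek x y.
have : ellis alpha `<=` [set k | pi (k x) - pi (k y) = pi x - pi y].
  apply: E_sub.
    apply: (@closed_eqz {ptws X -> X} Xm (fun k => pi (k x) - pi (k y)) (fun=> pi x - pi y)) => //; last exact: cst_continuous.
    move=> k'; apply: (@continuous_comp _ _ _ (fun k : {ptws X -> X} => (pi (k x), pi (k y))) (fun z : Xm * Xm => z.1 - z.2)); last exact: sub_continuous.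
    have h1 := @continuous_comp _ _ _ (fun f : {ptws X -> X} => f x) pi k' (@projC _ _ x k') (cpi _).
    have h2 := @continuous_comp _ _ _ (fun f : {ptws X -> X} => f y) pi k' (@projC _ _ y k') (cpi _).
    exact: (cvg_pair h1 h2).
  by move=> t /=; rewrite !epi opprD addrACA subrr addr0.
by move/(_ k Ek).
Qed.

Lemma zmod_aux (M : zmodType) (a b c d : M) : a - b = c - d -> a - c = b - d.
Proof.
move=> H; have -> : a - c = (a - b) + (b - c) by rewrite addrA subrK.
by rewrite H addrC addrA subrK.
Qed.


Unset Implicit Arguments. Set Strict Implicit. Set Printing Implicit Defensive.

Theorem mainTheorem5 (R : realType) (X : pseudoMetricType R) (T : zmodType)
  (alpha : T -> X -> X) (Xm : topologicalZmodType) (c : T -> Xm) (pi : X -> Xm)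
  (e : X -> X) (s : Xm -> X -> X) (f : X -> X) (a : Xm) :
  hausdorff_space X -> compact [set: X] ->
  is_action alpha -> minimal_system alpha ->
  is_max_equicontinuous_factor alpha c pi ->
  minimal_idempotent (ellis alpha) e ->
  (forall xi, structure_group (ellis alpha) e (s xi)) ->
  (forall xi, ev0 (pi_star pi (s xi)) = xi) ->
  (forall t xi, s (xi + c t) = alpha t \o s xi) ->
  K_e (ellis alpha) e pi f -> f <> e ->
  supp e pi (s a \o f \o Hinv (ellis alpha) e (s a)) = [set xi + a | xi in supp e pi f].
Proof.
move=> hX cX act _ [hXm _ _ [cpi spi epi] _] mie sS s0 _ [Kf _] _.
have [Hh [hg gh]] := Hinv_spec act hX cX mie (sS a).
set g := s a in Hh hg gh *.
set h := Hinv (ellis alpha) e g in Hh hg gh *.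
have ee : forall x, e (e x) = e x by move=> x; case: mie => _ /(congr1 (fun f => f x)).
have Ee : ellis alpha e by case: mie => -[I [[[_ IE _] _] Ie]] _; exact: IE.
have Eg : ellis alpha g := sg_E act Ee (sS a).
have [eg ge] := sg_props ee (sS a).
have [eh he] := sg_props ee Hh.
have [ef _] := sg_props ee Kf.
have hgx : forall x, h (g x) = e x by move=> x; exact: (congr1 (fun f => f x) hg).
have ghx : forall x, g (h x) = e x by move=> x; exact: (congr1 (fun f => f x) gh).
have tr := E_trans hXm cpi epi.
have pie : forall x, pi (e x) = pi x.
  move=> x; have := tr e Ee x (e x); rewrite ee subrr => /esym/eqP.
  by rewrite subr_eq0 => /eqP.
have pig : forall x, pi (g x) = pi x + a.
  move=> x.
  have P : exists h0 : Xm -> Xm, forall y, h0 (pi y) = pi (g y).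
    exists (fun z => z + (pi (g x) - pi x)) => y.
    have := zmod_aux (tr g Eg x y) => ->.
    by rewrite addrC subrK.
  have := epsilon_spec (inhabits id) _ P.
  rewrite -/(pi_star pi g) => Hps.
  have [y0 y00] := spi 0.
  have := s0 a; rewrite /ev0 -y00 Hps => ay.
  have := zmod_aux (tr g Eg x y0); rewrite ay y00 subr0 => <-.
  by rewrite addrC subrK.
have pih : forall x, pi (h x) = pi x - a.
  move=> x; have := pig (h x); rewrite ghx pie => ->.
  by rewrite addrK.
rewrite predeqE => xi; split.
  move=> [x [<- Hne]].
  exists (pi (h x)); last by rewrite pih subrK.
  exists (h x); split => //; rewrite eh => Hf; apply: Hne => /=.
  by rewrite he Hf ghx.
move=> [xi' [y [<- Hne]] <-].
exists (g y); split; first by rewrite pig.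
move=> /= H; apply: Hne.
move: H; rewrite eg hgx => /(congr1 h); rewrite !hgx ef.
by [].
Qed.
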